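(* In the multi-parameter setting described in the context, suppose $p_j(\theta)>0$ for all $j$ and all $\theta$. Then $H(\theta)=C_\Upsilon(\theta)$ holds if and only if the channel is quasi-classical, i.e. the eigenvectors $|w_k\rangle$ of the output state do not depend on $\theta$.
   Context: A multi-parameter quantum channel on density matrices on $\mathbb{C}^d$ is $\rho_0\mapsto\sum_kE_k(\theta)\rho_0E_k(\theta)^\dagger$ with $\theta\in\mathbb{R}^m$, Kraus operators differentiable in $\theta$, $\sum_kE_k^\dagger E_k=I$. The input is a fixed pure state $\rho_0=|\psi_0\rangle\langle\psi_0|$. Canonical Kraus operators $\{\Upsilon_k(\theta)\}_{k=1}^d$: a differentiable Kraus representation of the same channel with $\mathrm{tr}\{\Upsilon_k\rho_0\Upsilon_j^\dagger\}=\delta_{jk}p_k(\theta)$; the output is $\rho_{out}(\theta)=\sum_kp_k|w_k\rangle\langle w_k|$ with $|w_k\rangle=p_k^{-1/2}\Upsilon_k|\psi_0\rangle$ an orthonormal basis differentiable in $\theta$. Write $X^{(j)}=\partial X/\partial\theta^j$. $C_\Upsilon(\theta)_{jk}=4\sum_l\mathrm{Re}\,\mathrm{tr}\{\Upsilon_l^{(j)}\rho_0\Upsilon_l^{(k)\dagger}\}$; $H(\theta)_{jk}=\mathrm{Re}\,\mathrm{tr}\{\lambda^{(j)}\rho_{out}\lambda^{(k)}\}$ is the SLD quantum information matrix, with $\lambda^{(j)}$ a self-adjoint solution of $\partial\rho_{out}/\partial\theta^j=\frac12(\rho_{out}\lambda^{(j)}+\lambda^{(j)}\rho_{out})$. 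*)

(* Defs.v *)
From HB Require Import structures.
From mathcomp Require Import all_boot all_order all_algebra.
From mathcomp Require Import all_classical all_reals all_analysis.
From mathcomp Require Import complex.
Set Implicit Arguments. Unset Strict Implicit. Unset Printing Implicit Defensive.
Import Order.TTheory GRing.Theory Num.Theory.
Import numFieldNormedType.Exports.
Local Open Scope ring_scope.
Local Open Scope complex_scope.

Section Defs.
Variables (R : realType) (m d : nat).

Definition adjmx (p q : nat) (A : 'M[R[i]]_(p, q)) : 'M[R[i]]_(q, p) :=
  (map_mx (@conjc R) A)^T.

Definition ej (j : 'I_m) : 'rV[R]_m := delta_mx 0 j.

Definition mx_differentiable (p q : nat) (F : 'rV[R]_m -> 'M[R[i]]_(p, q)) :=
  forall (theta : 'rV[R]_m) (a : 'I_p) (b : 'I_q),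
    differentiable (fun t => complex.Re (F t a b)) theta /\
    differentiable (fun t => complex.Im (F t a b)) theta.

Definition pder (p q : nat) (F : 'rV[R]_m -> 'M[R[i]]_(p, q)) (j : 'I_m)
    (theta : 'rV[R]_m) : 'M[R[i]]_(p, q) :=
  \matrix_(a, b) ('D_(ej j) (fun t => complex.Re (F t a b)) theta
                  +i* 'D_(ej j) (fun t => complex.Im (F t a b)) theta).


Definition pure_state (psi0 : 'cV[R[i]]_d) : 'M[R[i]]_d := psi0 *m adjmx psi0.

Definition pk (Ups : 'I_d -> 'rV[R]_m -> 'M[R[i]]_d) (psi0 : 'cV[R[i]]_d)
    (k : 'I_d) (theta : 'rV[R]_m) : R :=
  complex.Re (\tr (Ups k theta *m pure_state psi0 *m adjmx (Ups k theta))).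

Definition wk (Ups : 'I_d -> 'rV[R]_m -> 'M[R[i]]_d) (psi0 : 'cV[R[i]]_d)
    (k : 'I_d) (theta : 'rV[R]_m) : 'cV[R[i]]_d :=
  ((Num.sqrt (pk Ups psi0 k theta))^-1)%:C *: (Ups k theta *m psi0).

Definition rho_out (Ups : 'I_d -> 'rV[R]_m -> 'M[R[i]]_d) (psi0 : 'cV[R[i]]_d)
    (theta : 'rV[R]_m) : 'M[R[i]]_d :=
  \sum_(k < d) Ups k theta *m pure_state psi0 *m adjmx (Ups k theta).

Definition C_Ups (Ups : 'I_d -> 'rV[R]_m -> 'M[R[i]]_d) (psi0 : 'cV[R[i]]_d)
    (theta : 'rV[R]_m) : 'M[R]_m :=
  \matrix_(j, k) (4 * \sum_(l < d) complex.Re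
     (\tr (pder (Ups l) j theta *m pure_state psi0 *m adjmx (pder (Ups l) k theta)))).

Definition is_SLD (Ups : 'I_d -> 'rV[R]_m -> 'M[R[i]]_d) (psi0 : 'cV[R[i]]_d)
    (lam : 'I_m -> 'rV[R]_m -> 'M[R[i]]_d) :=
  forall (j : 'I_m) (theta : 'rV[R]_m),
    adjmx (lam j theta) = lam j theta /\
    pder (rho_out Ups psi0) j theta =
      (2%:R^-1 : R[i]) *: (rho_out Ups psi0 theta *m lam j theta
                           + lam j theta *m rho_out Ups psi0 theta).

Definition H_SLD (Ups : 'I_d -> 'rV[R]_m -> 'M[R[i]]_d) (psi0 : 'cV[R[i]]_d)
    (lam : 'I_m -> 'rV[R]_m -> 'M[R[i]]_d) (theta : 'rV[R]_m) : 'M[R]_m :=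
  \matrix_(j, k) complex.Re (\tr (lam j theta *m rho_out Ups psi0 theta *m lam k theta)).

Definition quasi_classical (Ups : 'I_d -> 'rV[R]_m -> 'M[R[i]]_d)
    (psi0 : 'cV[R[i]]_d) :=
  forall (k : 'I_d) (theta theta' : 'rV[R]_m),
    wk Ups psi0 k theta = wk Ups psi0 k theta'.

End Defs.

(* Main.v *)
Require Import Defs.
From HB Require Import structures.
From mathcomp Require Import all_boot all_order all_algebra.
From mathcomp Require Import all_classical all_reals all_analysis.
From mathcomp Require Import complex.
From mathcomp Require Import ring lra.
Import Order.TTheory GRing.Theory Num.Theory.
Import numFieldNormedType.Exports.
Local Open Scope ring_scope.
Local Open Scope complex_scope.
Set Implicit Arguments. Unset Strict Implicit.

Notation cRe := complex.Re.
Notation cIm := complex.Im.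

Section C.
Variables (R : realType) (m : nat).
Local Notation V := 'rV[R]_m.

Lemma ReD (x y : R[i]) : cRe (x + y) = cRe x + cRe y. Proof. by case: x => a b; case: y => c d /=. Qed.
Lemma ImD (x y : R[i]) : cIm (x + y) = cIm x + cIm y. Proof. by case: x => a b; case: y => c d /=. Qed.
Lemma ReM (x y : R[i]) : cRe (x * y) = cRe x * cRe y - cIm x * cIm y. Proof. by case: x => a b; case: y => c d /=. Qed.
Lemma ImM (x y : R[i]) : cIm (x * y) = cRe x * cIm y + cIm x * cRe y. Proof. by case: x => a b; case: y => c d /=. Qed.
Lemma ReJ (x : R[i]) : cRe (x^*) = cRe x. Proof. by case: x. Qed.
Lemma ImJ (x : R[i]) : cIm (x^*) = - cIm x. Proof. by case: x. Qed.
Lemma Re0 : cRe (0 : R[i]) = 0. Proof. by []. Qed.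
Lemma Im0 : cIm (0 : R[i]) = 0. Proof. by []. Qed.

Definition cdf (g : V -> R[i]) := forall t,
  differentiable (fun s => cRe (g s)) t /\ differentiable (fun s => cIm (g s)) t.
Definition cD (g : V -> R[i]) (u t : V) : R[i] :=
  'D_u (fun s => cRe (g s)) t +i* 'D_u (fun s => cIm (g s)) t.

Lemma cD_ext g h u t : (forall s, g s = h s) -> cD g u t = cD h u t.
Proof. by move=> e; rewrite /cD; have -> : g = h by apply/funext. Qed.
Lemma cdf_ext g h : (forall s, g s = h s) -> cdf g -> cdf h.
Proof. by move=> e; have -> : g = h by apply/funext. Qed.

Lemma cdf_cst c : cdf (fun _ => c).
Proof. by move=> t; split; apply: differentiable_cst. Qed.
Lemma cD_cst c u t : cD (fun _ => c) u t = 0.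
Proof. by rewrite /cD !derive_cst. Qed.

Lemma cdfD g h : cdf g -> cdf h -> cdf (fun s => g s + h s).
Proof.
move=> dg dh t; have [g1 g2] := dg t; have [h1 h2] := dh t.
have -> : (fun s => cRe (g s + h s)) = (fun s => cRe (g s)) + (fun s => cRe (h s)).
  by apply/funext => s /=; rewrite ReD.
have -> : (fun s => cIm (g s + h s)) = (fun s => cIm (g s)) + (fun s => cIm (h s)).
  by apply/funext => s /=; rewrite ImD.
by split; apply: differentiableD.
Qed.

Lemma cDD g h u t : cdf g -> cdf h -> cD (fun s => g s + h s) u t = cD g u t + cD h u t.
Proof.
move=> dg dh; have [g1 g2] := dg t; have [h1 h2] := dh t.
rewrite /cD.
have -> : (fun s => cRe (g s + h s)) = (fun s => cRe (g s)) + (fun s => cRe (h s)).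
  by apply/funext => s /=; rewrite ReD.
have -> : (fun s => cIm (g s + h s)) = (fun s => cIm (g s)) + (fun s => cIm (h s)).
  by apply/funext => s /=; rewrite ImD.
by rewrite !deriveD //; apply: diff_derivable.
Qed.

Lemma cdfM g h : cdf g -> cdf h -> cdf (fun s => g s * h s).
Proof.
move=> dg dh t; have [g1 g2] := dg t; have [h1 h2] := dh t.
have -> : (fun s => cRe (g s * h s)) = (fun s => cRe (g s)) * (fun s => cRe (h s))
   - (fun s => cIm (g s)) * (fun s => cIm (h s)).
  by apply/funext => s /=; rewrite ReM.
have -> : (fun s => cIm (g s * h s)) = (fun s => cRe (g s)) * (fun s => cIm (h s))
   + (fun s => cIm (g s)) * (fun s => cRe (h s)).
  by apply/funext => s /=; rewrite ImM.
split; [apply: differentiableB|apply: differentiableD]; exact: differentiableM.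
Qed.

Lemma cDM g h u t : cdf g -> cdf h ->
  cD (fun s => g s * h s) u t = cD g u t * h t + g t * cD h u t.
Proof.
move=> dg dh; have [g1 g2] := dg t; have [h1 h2] := dh t.
rewrite /cD.
have -> : (fun s => cRe (g s * h s)) = (fun s => cRe (g s)) * (fun s => cRe (h s))
   - (fun s => cIm (g s)) * (fun s => cIm (h s)).
  by apply/funext => s /=; rewrite ReM.
have -> : (fun s => cIm (g s * h s)) = (fun s => cRe (g s)) * (fun s => cIm (h s))
   + (fun s => cIm (g s)) * (fun s => cRe (h s)).
  by apply/funext => s /=; rewrite ImM.
have r1 := diff_derivable (v:=u) g1; have r2 := diff_derivable (v:=u) g2.
have r3 := diff_derivable (v:=u) h1; have r4 := diff_derivable (v:=u) h2.
have r5 := derivableM r1 r3. have r6 := derivableM r2 r4.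
have r7 := derivableM r1 r4. have r8 := derivableM r2 r3.
rewrite (deriveB r5 r6) (deriveD r7 r8) (deriveM r1 r3) (deriveM r2 r4) (deriveM r1 r4) (deriveM r2 r3).
move: ('D_u (fun s => cRe (g s)) t) ('D_u (fun s => cIm (g s)) t)
  ('D_u (fun s => cRe (h s)) t) ('D_u (fun s => cIm (h s)) t) => A B C D.
case: (g t) => a b; case: (h t) => c d /=.
apply/eqP; rewrite eq_complex /=; apply/andP; split; apply/eqP; rewrite /GRing.scale /=.
by ring. by ring.
Qed.

Lemma cdfJ g : cdf g -> cdf (fun s => (g s)^*).
Proof.
move=> dg t; have [g1 g2] := dg t.
have -> : (fun s => cRe ((g s)^*)) = (fun s => cRe (g s)) by apply/funext => s; rewrite ReJ.
have -> : (fun s => cIm ((g s)^*)) = - (fun s => cIm (g s)) by apply/funext => s /=; rewrite ImJ.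
by split => //; apply: differentiableN.
Qed.

Lemma cDJ g u t : cdf g -> cD (fun s => (g s)^*) u t = (cD g u t)^*.
Proof.
move=> dg; have [g1 g2] := dg t; rewrite /cD.
have -> : (fun s => cRe ((g s)^*)) = (fun s => cRe (g s)) by apply/funext => s; rewrite ReJ.
have -> : (fun s => cIm ((g s)^*)) = - (fun s => cIm (g s)) by apply/funext => s /=; rewrite ImJ.
by rewrite deriveN //; apply: diff_derivable.
Qed.

Lemma cdf_real (f : V -> R) : (forall t, differentiable f t) -> cdf (fun s => (f s)%:C).
Proof. by move=> df t; split => //=; apply: differentiable_cst. Qed.

Lemma cD_real (f : V -> R) u t : cD (fun s => (f s)%:C) u t = ('D_u f t)%:C.
Proof. by rewrite /cD /= derive_cst. Qed.

Lemma cdf_sum n (g : 'I_n -> V -> R[i]) : (forall i, cdf (g i)) ->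
  cdf (fun s => \sum_(i < n) g i s).
Proof.
elim: n g => [|n IH] g dg.
  apply: (@cdf_ext (fun _ => 0)); first by move=> s; rewrite big_ord0.
  exact: cdf_cst.
apply: (@cdf_ext (fun s => \sum_(i < n) g (widen_ord (leqnSn n) i) s + g ord_max s)).
  by move=> s; rewrite big_ord_recr.
by apply: cdfD => //; apply: IH.
Qed.

Lemma cD_sum n (g : 'I_n -> V -> R[i]) u t : (forall i, cdf (g i)) ->
  cD (fun s => \sum_(i < n) g i s) u t = \sum_(i < n) cD (g i) u t.
Proof.
elim: n g => [|n IH] g dg.
  rewrite big_ord0 (@cD_ext _ (fun _ => 0)); first exact: cD_cst.
  by move=> s; rewrite big_ord0.
rewrite (@cD_ext _ (fun s => \sum_(i < n) g (widen_ord (leqnSn n) i) s + g ord_max s)).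
  rewrite cDD ?big_ord_recr ?IH //; apply: cdf_sum => i; exact: dg.
by move=> s; rewrite big_ord_recr.
Qed.

Lemma ReSum n (F : 'I_n -> R[i]) : cRe (\sum_(i < n) F i) = \sum_(i < n) cRe (F i).
Proof. by apply: (big_morph _ ReD Re0). Qed.
Lemma ImSum n (F : 'I_n -> R[i]) : cIm (\sum_(i < n) F i) = \sum_(i < n) cIm (F i).
Proof. by apply: (big_morph _ ImD Im0). Qed.

Lemma deriv_lin (f : V -> R) u t : differentiable f t ->
  'D_u f t = \sum_(j < m) u 0 j * 'D_(ej R j) f t.
Proof.
move=> df; rewrite deriveE // {1}(row_sum_delta u) linear_sum.
apply: eq_bigr => j _; rewrite linearZ deriveE //.
Qed.

Lemma cD_lin g u t : cdf g ->
  cD g u t = \sum_(j < m) (u 0 j)%:C * cD g (ej R j) t.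
Proof.
move=> dg; have [g1 g2] := dg t.
apply/eqP; rewrite eq_complex ReSum ImSum /cD /= (deriv_lin u g1) (deriv_lin u g2).
apply/andP; split; apply/eqP; apply: eq_bigr => j _ /=; ring.
Qed.

Definition mdf p q (F : V -> 'M[R[i]]_(p, q)) := forall a b, cdf (fun s => F s a b).
Definition pdir p q (F : V -> 'M[R[i]]_(p, q)) u t :=
  \matrix_(a, b) cD (fun s => F s a b) u t.

Lemma mdfE p q (F : V -> 'M[R[i]]_(p, q)) : mx_differentiable F -> mdf F.
Proof. by move=> dF a b t; apply: dF. Qed.

Lemma pderE p q (F : V -> 'M[R[i]]_(p, q)) j t : pder F j t = pdir F (ej R j) t.
Proof. by []. Qed.

Lemma mdf_cst p q (A : 'M[R[i]]_(p, q)) : mdf (fun _ => A).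
Proof. by move=> a b; apply: cdf_cst. Qed.
Lemma pdir_cst p q (A : 'M[R[i]]_(p, q)) u t : pdir (fun _ => A) u t = 0.
Proof. by apply/matrixP => a b; rewrite !mxE cD_cst. Qed.

Lemma mdf_mul p q r (F : V -> 'M[R[i]]_(p, q)) (G : V -> 'M[R[i]]_(q, r)) :
  mdf F -> mdf G -> mdf (fun s => F s *m G s).
Proof.
move=> dF dG a b; apply: (@cdf_ext (fun s => \sum_c F s a c * G s c b)).
  by move=> s; rewrite mxE.
by apply: cdf_sum => c; apply: cdfM.
Qed.

Lemma pdir_mul p q r (F : V -> 'M[R[i]]_(p, q)) (G : V -> 'M[R[i]]_(q, r)) u t :
  mdf F -> mdf G ->
  pdir (fun s => F s *m G s) u t = pdir F u t *m G t + F t *m pdir G u t.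
Proof.
move=> dF dG; apply/matrixP => a b; rewrite !mxE.
rewrite (@cD_ext _ (fun s => \sum_c F s a c * G s c b)); last by move=> s; rewrite mxE.
rewrite cD_sum; last by move=> c; apply: cdfM.
rewrite -big_split /=; apply: eq_bigr => c _; rewrite cDM // !mxE //.
Qed.

Lemma mdf_adj p q (F : V -> 'M[R[i]]_(p, q)) : mdf F -> mdf (fun s => adjmx (F s)).
Proof.
move=> dF a b; apply: (@cdf_ext (fun s => (F s b a)^*)); first by move=> s; rewrite !mxE.
exact: cdfJ.
Qed.

Lemma pdir_adj p q (F : V -> 'M[R[i]]_(p, q)) u t : mdf F ->
  pdir (fun s => adjmx (F s)) u t = adjmx (pdir F u t).
Proof.
move=> dF; apply/matrixP => a b; rewrite !mxE.
rewrite (@cD_ext _ (fun s => (F s b a)^*)); last by move=> s; rewrite !mxE.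
by rewrite cDJ.
Qed.

Lemma mdf_add p q (F G : V -> 'M[R[i]]_(p, q)) : mdf F -> mdf G -> mdf (fun s => F s + G s).
Proof.
move=> dF dG a b; apply: (@cdf_ext (fun s => F s a b + G s a b)); first by move=> s; rewrite !mxE.
exact: cdfD.
Qed.

Lemma pdir_add p q (F G : V -> 'M[R[i]]_(p, q)) u t : mdf F -> mdf G ->
  pdir (fun s => F s + G s) u t = pdir F u t + pdir G u t.
Proof.
move=> dF dG; apply/matrixP => a b; rewrite !mxE.
rewrite (@cD_ext _ (fun s => F s a b + G s a b)); last by move=> s; rewrite !mxE.
by rewrite cDD.
Qed.

Lemma mdf_sum n p q (F : 'I_n -> V -> 'M[R[i]]_(p, q)) : (forall i, mdf (F i)) ->
  mdf (fun s => \sum_(i < n) F i s).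
Proof.
move=> dF a b; apply: (@cdf_ext (fun s => \sum_i F i s a b)).
  by move=> s; rewrite summxE.
by apply: cdf_sum => i; apply: dF.
Qed.

Lemma pdir_sum n p q (F : 'I_n -> V -> 'M[R[i]]_(p, q)) u t : (forall i, mdf (F i)) ->
  pdir (fun s => \sum_(i < n) F i s) u t = \sum_(i < n) pdir (F i) u t.
Proof.
move=> dF; apply/matrixP => a b; rewrite !mxE summxE.
rewrite (@cD_ext _ (fun s => \sum_i F i s a b)); last by move=> s; rewrite summxE.
rewrite cD_sum; last by move=> i; apply: dF.
by apply: eq_bigr => i _; rewrite mxE.
Qed.

Lemma pdir_lin p q (F : V -> 'M[R[i]]_(p, q)) u t : mdf F ->
  pdir F u t = \sum_(j < m) (u 0 j)%:C *: pdir F (ej R j) t.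
Proof.
move=> dF; apply/matrixP => a b; rewrite !mxE summxE cD_lin //.
by apply: eq_bigr => j _; rewrite !mxE.
Qed.

End C.

Section Alg.
Variable R : realType.
Local Notation C := R[i].

Lemma adjmxE p q (A : 'M[C]_(p, q)) i j : adjmx A i j = (A j i)^*.
Proof. by rewrite !mxE. Qed.
Lemma adjmxM p q r (A : 'M[C]_(p, q)) (B : 'M[C]_(q, r)) :
  adjmx (A *m B) = adjmx B *m adjmx A.
Proof. by rewrite /adjmx map_mxM trmx_mul. Qed.
Lemma adjmxK p q (A : 'M[C]_(p, q)) : adjmx (adjmx A) = A.
Proof. by apply/matrixP => i j; rewrite !mxE conjcK. Qed.
Lemma adjmxD p q (A B : 'M[C]_(p, q)) : adjmx (A + B) = adjmx A + adjmx B.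
Proof. by apply/matrixP => i j; rewrite !mxE rmorphD. Qed.
Lemma adjmxZ p q c (A : 'M[C]_(p, q)) : adjmx (c *: A) = c^* *: adjmx A.
Proof. by apply/matrixP => i j; rewrite !mxE rmorphM. Qed.

Lemma mxDE p q (A B : 'M[C]_(p, q)) i j : (A + B) i j = A i j + B i j.
Proof. by rewrite mxE. Qed.
Lemma mxZE p q c (A : 'M[C]_(p, q)) i j : (c *: A) i j = c * A i j.
Proof. by rewrite mxE. Qed.

Lemma trace_mul n (A B : 'M[C]_n) : \tr (A *m B) = \sum_a \sum_b A a b * B b a.
Proof. by rewrite /mxtrace; apply: eq_bigr => a _; rewrite mxE. Qed.

Lemma sc_off (sa sb : R) (y z mu : C) : 0 < sa -> 0 < sb ->
 z^* * sb%:C + sa%:C * y = 0 ->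
 2 * (y * sb%:C + sa%:C * z^*) = sa%:C * (sa%:C * mu) + mu * sb%:C * sb%:C ->
 4 * (cRe y ^+ 2 + cIm y ^+ 2) - sb ^+ 2 * (cRe mu ^+ 2 + cIm mu ^+ 2)
   = 16 * sa ^+ 2 * sb ^+ 2 * (cRe y ^+ 2 + cIm y ^+ 2) / (sa ^+ 2 + sb ^+ 2) ^+ 2.
Proof.
move=> sa0 sb0; case: y => y1 y2; case: z => z1 z2; case: mu => m1 m2.
have -> : (2 : R[i]) = (2 : R)%:C by rewrite rmorph_nat.
move/eqP; rewrite eq_complex /= => /andP[/eqP O1 /eqP O2].
move/eqP; rewrite eq_complex /= => /andP[/eqP E1 /eqP E2].
have sbn : sb != 0 by rewrite gt_eqF.
have Qn : sa ^+ 2 + sb ^+ 2 != 0 by rewrite gt_eqF // addr_gt0 // exprn_gt0.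
have hz1 : z1 = - (sa * y1) / sb.
  by apply: (mulIf sbn); rewrite divfK //; lra.
have hz2 : z2 = (sa * y2) / sb.
  by apply: (mulIf sbn); rewrite divfK //; lra.
have hm1 : m1 = 2 * (y1 * sb + sa * z1) / (sa ^+ 2 + sb ^+ 2).
  by apply: (mulIf Qn); rewrite divfK //; lra.
have hm2 : m2 = 2 * (y2 * sb - sa * z2) / (sa ^+ 2 + sb ^+ 2).
  by apply: (mulIf Qn); rewrite divfK //; lra.
rewrite /= hm1 hm2 hz1 hz2; field.
by rewrite sbn Qn.
Qed.

Lemma sc_diag (s : R) (y mu : C) : 0 < s ->
 2 * (y * s%:C + s%:C * y^*) = s%:C * (s%:C * mu) + mu * s%:C * s%:C ->
 4 * (cRe y ^+ 2 + cIm y ^+ 2) - s ^+ 2 * (cRe mu ^+ 2 + cIm mu ^+ 2) = 4 * cIm y ^+ 2.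
Proof.
move=> s0; case: y => y1 y2; case: mu => m1 m2.
have -> : (2 : R[i]) = (2 : R)%:C by rewrite rmorph_nat.
move/eqP; rewrite eq_complex /= => /andP[/eqP E1 /eqP E2].
have sn : s != 0 by rewrite gt_eqF.
have hm1 : m1 = 2 * y1 / s.
  apply: (mulIf sn); rewrite divfK //; apply/eqP; rewrite -subr_eq0; apply/eqP.
  have : (m1 * s - 2 * y1) * s = 0 by nra.
  by move/eqP; rewrite mulf_eq0 (negPf sn) orbF => /eqP.
have hm2 : m2 = 0.
  have : m2 * (s * s) = 0 by nra.
  by move/eqP; rewrite !mulf_eq0 (negPf sn) /= orbF => /eqP.
rewrite /= hm1 hm2; field.
by rewrite sn.
Qed.
Lemma sc_M0 (sa sb : R) (mu : C) : 0 < sa -> 0 < sb ->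
  2 * (0 * sb%:C + sa%:C * 0^*) = sa%:C * (sa%:C * mu) + mu * sb%:C * sb%:C -> mu = 0.
Proof.
move=> sa0 sb0; case: mu => m1 m2.
have -> : (2 : R[i]) = (2 : R)%:C by rewrite rmorph_nat.
move/eqP; rewrite eq_complex /= => /andP[/eqP E1 /eqP E2].
have Qp : 0 < sa ^+ 2 + sb ^+ 2 by rewrite addr_gt0 // exprn_gt0.
have h1 : m1 * (sa ^+ 2 + sb ^+ 2) = 0 by nra.
have h2 : m2 * (sa ^+ 2 + sb ^+ 2) = 0 by nra.
move/eqP: h1; rewrite mulf_eq0 (gt_eqF Qp) orbF => /eqP ->.
by move/eqP: h2; rewrite mulf_eq0 (gt_eqF Qp) orbF => /eqP ->.
Qed.

Lemma sc_M1 (s k : R) (mu : C) : 0 < s ->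
  2 * (s%:C * k%:C * s%:C + s%:C * (s%:C * k%:C)^*) = s%:C * (s%:C * mu) + mu * s%:C * s%:C ->
  mu = (2 * k)%:C.
Proof.
move=> s0; case: mu => m1 m2.
have -> : (2 : R[i]) = (2 : R)%:C by rewrite rmorph_nat.
move/eqP; rewrite eq_complex /= => /andP[/eqP E1 /eqP E2].
have Qp : 0 < s ^+ 2 by rewrite exprn_gt0.
have h1 : (m1 - 2 * k) * s ^+ 2 = 0 by nra.
have h2 : m2 * s ^+ 2 = 0 by nra.
move/eqP: h1; rewrite mulf_eq0 (gt_eqF Qp) orbF subr_eq0 => /eqP ->.
by move/eqP: h2; rewrite mulf_eq0 (gt_eqF Qp) orbF => /eqP ->.
Qed.

Variables (d : nat) (W : 'M[C]_d) (s : 'I_d -> R).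
Hypothesis WW : adjmx W *m W = 1%:M.

Definition sr := \row_a ((s a)%:C : C).
Local Notation S := (diag_mx sr).
Local Notation V := (W *m S).

Lemma WW' : W *m adjmx W = 1%:M.
Proof. exact: mulmx1C. Qed.
Lemma WWK p (B : 'M[C]_(d, p)) : adjmx W *m (W *m B) = B.
Proof. by rewrite mulmxA WW mul1mx. Qed.
Lemma WWK' p (B : 'M[C]_(d, p)) : W *m (adjmx W *m B) = B.
Proof. by rewrite mulmxA WW' mul1mx. Qed.
Lemma adjS : adjmx S = S.
Proof.
apply/matrixP => i j; rewrite !mxE eq_sym.
case: eqP => [->|_]; rewrite ?mulr1n ?mulr0n; [exact: conjc_real | exact: conjc0].
Qed.
Lemma adjV : adjmx V = S *m adjmx W.
Proof. by rewrite adjmxM adjS. Qed.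

Definition Ym (D : 'M[C]_d) := adjmx W *m D.
Definition Mm (L : 'M[C]_d) := adjmx W *m L *m W.

Lemma Smul_l (A : 'M[C]_d) a b : (S *m A) a b = (s a)%:C * A a b.
Proof. by rewrite mul_diag_mx !mxE. Qed.
Lemma Smul_r (A : 'M[C]_d) a b : (A *m S) a b = A a b * (s b)%:C.
Proof. by rewrite mul_mx_diag !mxE. Qed.

Lemma X_rel D L dr :
  dr = D *m adjmx V + V *m adjmx D ->
  dr = (2^-1 : C) *: (V *m adjmx V *m L + L *m (V *m adjmx V)) ->
  forall a b, 2 * (Ym D a b * (s b)%:C + (s a)%:C * (Ym D b a)^*)
     = ((s a)%:C * ((s a)%:C * Mm L a b) + Mm L a b * (s b)%:C * (s b)%:C).
Proof.
move=> e1 e2 a b.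
have E : adjmx W *m dr *m W = Ym D *m S + S *m adjmx (Ym D).
  rewrite e1 adjV /Ym adjmxM adjmxK mulmxDr mulmxDl -!mulmxA !WWK.
  by rewrite WW mulmx1.
have F : adjmx W *m dr *m W = (2^-1 : C) *: (S *m (S *m Mm L) + Mm L *m S *m S).
  rewrite e2 adjV /Mm -scalemxAr -scalemxAl mulmxDr mulmxDl -!mulmxA !WWK.
  by rewrite WW mulmx1.
have G : Ym D *m S + S *m adjmx (Ym D) = (2^-1 : C) *: (S *m (S *m Mm L) + Mm L *m S *m S).
  by rewrite -E -F.
move/matrixP/(_ a b): G.
rewrite !mxDE mxZE mxDE !Smul_r !Smul_l adjmxE => ->.
rewrite mulrA mulfV ?mul1r ?pnatr_eq0 //.
Qed.

Lemma orth_rel D a b :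
  (adjmx D *m V + adjmx V *m D) a b = (Ym D b a)^* * (s b)%:C + (s a)%:C * Ym D a b.
Proof.
rewrite adjV mxE mulmxA -[adjmx D *m W]adjmxK adjmxM adjmxK -mulmxA.
by rewrite Smul_r Smul_l adjmxE.
Qed.

Lemma C_rel D1 D2 : \tr (D1 *m adjmx D2) = \tr (Ym D1 *m adjmx (Ym D2)).
Proof.
rewrite /Ym adjmxM adjmxK -[D1 in LHS]WWK' -!mulmxA mxtrace_mulC -!mulmxA.
done.
Qed.

Lemma H_rel L1 L2 : \tr (L1 *m (V *m adjmx V) *m L2) = \tr (Mm L1 *m (S *m S) *m Mm L2).
Proof.
have -> : Mm L1 *m (S *m S) *m Mm L2 = adjmx W *m (L1 *m (V *m adjmx V) *m L2) *m W.
  by rewrite adjV /Mm !mulmxA.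
by rewrite [in RHS]mxtrace_mulC WWK'.
Qed.


Hypothesis spos : forall a, 0 < s a.

Lemma Mherm L : adjmx L = L -> forall a b, Mm L b a = (Mm L a b)^*.
Proof.
move=> hL a b; have : adjmx (Mm L) = Mm L by rewrite /Mm !adjmxM adjmxK hL mulmxA.
by move/matrixP/(_ b a); rewrite adjmxE => <-.
Qed.

Lemma trC D1 D2 : cRe (\tr (D1 *m adjmx D2)) =
  \sum_a \sum_b cRe (Ym D1 a b * (Ym D2 a b)^*).
Proof.
rewrite C_rel trace_mul ReSum; apply: eq_bigr => a _; rewrite ReSum.
by apply: eq_bigr => b _; rewrite adjmxE.
Qed.

Lemma trH L1 L2 : cRe (\tr (L1 *m (V *m adjmx V) *m L2)) =
  \sum_a \sum_b cRe (Mm L1 a b * (s b)%:C * (s b)%:C * Mm L2 b a).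
Proof.
rewrite H_rel trace_mul ReSum; apply: eq_bigr => a _; rewrite ReSum.
by apply: eq_bigr => b _; rewrite mulmxA !Smul_r.
Qed.

Lemma fwd D L dr :
 adjmx L = L ->
 dr = D *m adjmx V + V *m adjmx D ->
 dr = (2^-1 : C) *: (V *m adjmx V *m L + L *m (V *m adjmx V)) ->
 (forall a b, a != b -> (adjmx D *m V + adjmx V *m D) a b = 0) ->
 4 * cRe (\tr (D *m adjmx D)) = cRe (\tr (L *m (V *m adjmx V) *m L)) ->
 forall a b, Ym D a b = if a == b then (cRe (Ym D a a))%:C else 0.
Proof.
move=> hL e1 e2 hO hE.
set f := fun a b => 4 * (cRe (Ym D a b) ^+ 2 + cIm (Ym D a b) ^+ 2)
   - (s b) ^+ 2 * (cRe (Mm L a b) ^+ 2 + cIm (Mm L a b) ^+ 2).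
have hX := X_rel e1 e2.
have fE a b : a != b -> f a b = 16 * (s a) ^+ 2 * (s b) ^+ 2 *
   (cRe (Ym D a b) ^+ 2 + cIm (Ym D a b) ^+ 2) / ((s a) ^+ 2 + (s b) ^+ 2) ^+ 2.
  move=> ne; apply: sc_off (spos a) (spos b) _ (hX a b).
  by rewrite -orth_rel; apply: hO.
have fD a : f a a = 4 * cIm (Ym D a a) ^+ 2.
  exact: sc_diag (spos a) (hX a a).
have f0 a b : 0 <= f a b.
  case: (eqVneq a b) => [->|ne]; first by rewrite fD mulr_ge0 // sqr_ge0.
  rewrite fE //; apply: divr_ge0; last exact: sqr_ge0.
  apply: mulr_ge0; last by rewrite addr_ge0 ?sqr_ge0.
  by apply: mulr_ge0; [apply: mulr_ge0; [lra|]|]; exact: sqr_ge0.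
have sf : \sum_a \sum_b f a b = 0.
  have : 4 * cRe (\tr (D *m adjmx D)) - cRe (\tr (L *m (V *m adjmx V) *m L)) = 0.
    by rewrite hE subrr.
  rewrite trC trH mulr_sumr -sumrB => h; rewrite -[in RHS]h; apply: eq_bigr => a _.
  rewrite mulr_sumr -sumrB; apply: eq_bigr => b _.
  rewrite /f (Mherm hL a b) -!mulrA.
  case: (Ym D a b) => y1 y2; case: (Mm L a b) => m1 m2 /=; ring.
have fz a b : f a b = 0.
  move/eqP: sf; rewrite psumr_eq0 => [/allP/(_ a (mem_index_enum _))|a' _].
    rewrite implyTb => /eqP; move/eqP; rewrite psumr_eq0 => [/allP/(_ b (mem_index_enum _))|b' _ //].
    by rewrite implyTb => /eqP.
  by rewrite sumr_ge0.
move=> a b; case: (eqVneq a b) => [<-|ne].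
  move: (fz a a); rewrite fD => h0.
  have h : cIm (Ym D a a) = 0 by apply/eqP; rewrite -sqrf_eq0; apply/eqP; lra.
  by move: h; case: (Ym D a a) => y1 y2 /= ->.
have hpos : 0 < 16 * s a ^+ 2 * s b ^+ 2 / (s a ^+ 2 + s b ^+ 2) ^+ 2.
  have sa := spos a; have sb := spos b.
  apply: divr_gt0; last by rewrite exprn_gt0 // addr_gt0 // exprn_gt0.
  by rewrite !mulr_gt0 ?exprn_gt0 //; lra.
have N0 : cRe (Ym D a b) ^+ 2 + cIm (Ym D a b) ^+ 2 = 0.
  have := fz a b; rewrite fE // mulrAC => /eqP; rewrite mulf_eq0 (gt_eqF hpos) /=.
  by move/eqP.
case: (Ym D a b) N0 => y1 y2 /= N0.
have -> : y1 = 0 by nra.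
by have -> : y2 = 0 by nra.
Qed.

Definition kdiag (k : 'I_d -> R) := diag_mx (\row_b ((k b)%:C : C)).

Lemma Ydiag (k : 'I_d -> R) a b :
  Ym (V *m kdiag k) a b = if a == b then (s a)%:C * (k a)%:C else 0.
Proof.
rewrite /Ym /kdiag !mulmxA WW mul1mx mul_mx_diag !mxE.
by case: (eqVneq a b) => [<-|ne]; rewrite ?mulr1n ?mulr0n ?mul0r.
Qed.

Lemma Mdiag D L dr (k : 'I_d -> R) :
 dr = D *m adjmx V + V *m adjmx D ->
 dr = (2^-1 : C) *: (V *m adjmx V *m L + L *m (V *m adjmx V)) ->
 D = V *m kdiag k ->
 forall a b, Mm L a b = if a == b then (2 * k a)%:C else 0.
Proof.
move=> e1 e2 eD a b; have := X_rel e1 e2 a b.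
rewrite eD !Ydiag eq_sym.
case: (eqVneq a b) => [<-|ne]; first exact: sc_M1.
exact: sc_M0.
Qed.

Lemma conv D1 D2 L1 L2 dr1 dr2 (k1 k2 : 'I_d -> R) :
 dr1 = D1 *m adjmx V + V *m adjmx D1 ->
 dr1 = (2^-1 : C) *: (V *m adjmx V *m L1 + L1 *m (V *m adjmx V)) ->
 dr2 = D2 *m adjmx V + V *m adjmx D2 ->
 dr2 = (2^-1 : C) *: (V *m adjmx V *m L2 + L2 *m (V *m adjmx V)) ->
 D1 = V *m kdiag k1 -> D2 = V *m kdiag k2 ->
 4 * cRe (\tr (D1 *m adjmx D2)) = cRe (\tr (L1 *m (V *m adjmx V) *m L2)).
Proof.
move=> e1 f1 e2 f2 eD1 eD2.
have M1 := Mdiag e1 f1 eD1; have M2 := Mdiag e2 f2 eD2.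
rewrite trC trH mulr_sumr; apply: eq_bigr => a _.
rewrite mulr_sumr (bigD1 a) //= [in RHS](bigD1 a) //=.
rewrite big1 => [|b nb]; last by rewrite eD1 eD2 !Ydiag eq_sym (negPf nb) mul0r Re0 mulr0.
rewrite big1 => [|b nb]; last by rewrite M1 M2 eq_sym (negPf nb) mul0r !mulr0 Re0.
rewrite eD1 eD2 !Ydiag M1 M2 eqxx !addr0.
rewrite /real_complex_def /=; ring.
Qed.

End Alg.


Lemma const_D0 (R : realType) (m : nat) (f : 'rV[R]_m -> R) :
  (forall t, differentiable f t) -> (forall u t, 'D_u f t = 0) ->
  forall t t', f t = f t'.
Proof.
move=> df D0 t t'.
have d0 x : 'd f x = (fun _ => 0) :> ('rV[R]_m -> R).
  by apply/funext => v; rewrite -deriveE // D0.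
pose line := fun r : R => r *: (t' - t) + t.
have dl r : differentiable line r.
  apply: differentiableD; last exact: differentiable_cst.
  by apply: differentiableZl.
pose phi := f \o line.
have dphi r : differentiable phi r by apply: differentiable_comp.
have der (r : R) : is_derive r (1 : R) phi (0 : R).
  have := derivableP (@diff_derivable _ _ _ phi r (1 : R) (dphi r)).
  by rewrite deriveE // diff_comp // d0.
have cphi : continuous phi by move=> x; exact: differentiable_continuous.
have [c _] := @MVT R phi (fun _ => 0) 0 1 ltr01 (fun x _ => der x)
   (continuous_subspaceT cphi).
rewrite mul0r => /eqP; rewrite subr_eq0 => /eqP.
by rewrite /phi /line /= scale0r add0r scale1r subrK => ->.
Qed.

Section Main.
Variables (R : realType) (m d : nat) (psi0 : 'cV[R[i]]_d)
  (Ups : 'I_d -> 'rV[R]_m -> 'M[R[i]]_d) (lam : 'I_m -> 'rV[R]_m -> 'M[R[i]]_d).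
Hypotheses (hU : forall k, mx_differentiable (Ups k))
 (hO : forall theta (j k : 'I_d),
      \tr (Ups k theta *m pure_state psi0 *m adjmx (Ups j theta))
      = (j == k)%:R * (pk Ups psi0 k theta)%:C)
 (hp : forall (j : 'I_d) theta, 0 < pk Ups psi0 j theta)
 (hL : is_SLD Ups psi0 lam).

Local Notation C := R[i].
Definition Mc (f : 'I_d -> 'cV[C]_d) : 'M[C]_d := \matrix_(a, b) f b a 0.

Lemma outer (f g : 'I_d -> 'cV[C]_d) :
  \sum_k f k *m adjmx (g k) = Mc f *m adjmx (Mc g).
Proof.
apply/matrixP => a b; rewrite summxE !mxE; apply: eq_bigr => k _.
by rewrite !mxE big_ord1 !mxE.
Qed.

Lemma tr_outer (x y : 'cV[C]_d) : \tr (x *m adjmx y) = (adjmx y *m x) 0 0.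
Proof. by rewrite mxtrace_mulC /mxtrace big_ord1. Qed.

Lemma pure_mul (A B : 'M[C]_d) :
  A *m pure_state psi0 *m adjmx B = (A *m psi0) *m adjmx (B *m psi0).
Proof. by rewrite /pure_state adjmxM !mulmxA. Qed.

Definition Vf t : 'M[C]_d := Mc (fun b => Ups b t *m psi0).

Lemma rhoV t : rho_out Ups psi0 t = Vf t *m adjmx (Vf t).
Proof.
rewrite /rho_out -outer; apply: eq_bigr => k _; exact: pure_mul.
Qed.

Lemma VtV t a b : (adjmx (Vf t) *m Vf t) a b = (a == b)%:R * (pk Ups psi0 b t)%:C.
Proof.
rewrite -hO pure_mul tr_outer !mxE; apply: eq_bigr => c _; rewrite !mxE.
by rewrite mulrC.
Qed.

Lemma mdfV : mdf Vf.
Proof.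
move=> a b; apply: (@cdf_ext _ _ (fun s => (Ups b s *m psi0) a 0)).
  by move=> s; rewrite [RHS]mxE.
exact: (mdf_mul (mdfE (hU b)) (mdf_cst psi0)).
Qed.

Lemma pdirV u t : pdir Vf u t = Mc (fun b => pdir (Ups b) u t *m psi0).
Proof.
apply/matrixP => a b; rewrite [LHS]mxE [RHS]mxE.
rewrite (@cD_ext _ _ _ (fun s => (Ups b s *m psi0) a 0)); last by move=> s; rewrite [LHS]mxE.
have E := pdir_mul u t (mdfE (hU b)) (mdf_cst psi0).
by rewrite pdir_cst mulmx0 addr0 in E; rewrite -E mxE.
Qed.


Lemma VtV_fun : (fun s => adjmx (Vf s) *m Vf s) =
  (fun s => adjmx (Vf s) *m Vf s).
Proof. by []. Qed.

Lemma pk_diff b t : differentiable (pk Ups psi0 b) t.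
Proof.
have -> : pk Ups psi0 b = fun s => cRe ((adjmx (Vf s) *m Vf s) b b).
  by apply/funext => s; rewrite VtV eqxx mul1r.
exact: (mdf_mul (mdf_adj mdfV) mdfV b b t).1.
Qed.

Definition sg b t := Num.sqrt (pk Ups psi0 b t).
Lemma sg_pos b t : 0 < sg b t.
Proof. by rewrite sqrtr_gt0. Qed.
Lemma sg_sq b t : sg b t * sg b t = pk Ups psi0 b t.
Proof. by rewrite -expr2 sqr_sqrtr // ltW. Qed.
Lemma sg_diff b t : differentiable (sg b) t.
Proof.
have -> : sg b = Num.sqrt \o pk Ups psi0 b by [].
apply: differentiable_comp; first exact: pk_diff.
apply/derivable1_diffP; by case: (is_derive1_sqrt (hp b t)).
Qed.
Lemma sgV_diff b t : differentiable (fun s => (sg b s)^-1) t.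
Proof. by apply: differentiableV; [exact: sg_diff|rewrite gt_eqF // sg_pos]. Qed.

Definition Wf t := Vf t *m diag_mx (sr (fun b => (sg b t)^-1)).

Lemma diag1 : diag_mx (\row_(b < d) (1 : C)) = 1%:M.
Proof. by apply/matrixP => a b; rewrite !mxE. Qed.

Lemma VWS t : Vf t = Wf t *m diag_mx (sr (fun b => sg b t)).
Proof.
rewrite /Wf -mulmxA mulmx_diag.
rewrite (_ : \row__ _ = \row_(b < d) (1 : C)) ?diag1 ?mulmx1 //.
apply/rowP => b; rewrite !mxE -rmorphM /= mulVf //.
by rewrite gt_eqF // sg_pos.
Qed.

Lemma WWf t : adjmx (Wf t) *m Wf t = 1%:M.
Proof.
have -> : adjmx (Wf t) *m Wf t = diag_mx (sr (fun b => (sg b t)^-1)) *m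
   (adjmx (Vf t) *m Vf t) *m diag_mx (sr (fun b => (sg b t)^-1)).
  by rewrite /Wf adjmxM adjS !mulmxA.
apply/matrixP => a b; rewrite Smul_r Smul_l VtV !mxE.
case: (eqVneq a b) => [<-|ne]; last by rewrite mul0r mulr0 mul0r.
rewrite mul1r -!rmorphM /= -sg_sq mulrA mulVf ?mul1r ?mulfV //.
  by rewrite gt_eqF // sg_pos.
by rewrite gt_eqF // sg_pos.
Qed.

Lemma w_entry b t a : wk Ups psi0 b t a 0 = ((sg b t)^-1)%:C * Vf t a b.
Proof. by rewrite /wk !mxE. Qed.

Lemma tr_sum n (A : 'I_n -> 'M[C]_d) : \tr (\sum_(k < n) A k) = \sum_(k < n) \tr (A k).
Proof.
rewrite /mxtrace; under eq_bigr do rewrite summxE.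
exact: exchange_big.
Qed.

Lemma Ctr j k t : C_Ups Ups psi0 t j k =
  4 * cRe (\tr (pdir Vf (ej R j) t *m adjmx (pdir Vf (ej R k) t))).
Proof.
rewrite mxE !pdirV -outer; congr (_ * _).
rewrite tr_sum ReSum; apply: eq_bigr => l _.
by rewrite pure_mul.
Qed.

Lemma Htr j k t : H_SLD Ups psi0 lam t j k =
  cRe (\tr (lam j t *m (Vf t *m adjmx (Vf t)) *m lam k t)).
Proof. by rewrite mxE rhoV. Qed.

Lemma e1 u t : pdir (rho_out Ups psi0) u t =
  pdir Vf u t *m adjmx (Vf t) + Vf t *m adjmx (pdir Vf u t).
Proof.
have -> : rho_out Ups psi0 = fun s => Vf s *m adjmx (Vf s) by apply/funext => s; rewrite rhoV.
rewrite pdir_mul; [|exact: mdfV|exact: (mdf_adj mdfV)].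
by rewrite pdir_adj //; exact: mdfV.
Qed.

Lemma e2 j t : pder (rho_out Ups psi0) j t =
  (2^-1 : C) *: (Vf t *m adjmx (Vf t) *m lam j t + lam j t *m (Vf t *m adjmx (Vf t))).
Proof. by have [_ ->] := hL j t; rewrite rhoV. Qed.

Lemma eO u t : pdir (fun s => adjmx (Vf s) *m Vf s) u t =
  adjmx (pdir Vf u t) *m Vf t + adjmx (Vf t) *m pdir Vf u t.
Proof.
rewrite pdir_mul; [|exact: (mdf_adj mdfV)|exact: mdfV].
by rewrite pdir_adj //; exact: mdfV.
Qed.

Lemma hOff u t a b : a != b ->
  (adjmx (pdir Vf u t) *m Vf t + adjmx (Vf t) *m pdir Vf u t) a b = 0.
Proof.
move=> ne; rewrite -eO mxE (@cD_ext _ _ _ (fun _ => 0)); first exact: cD_cst.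
by move=> s; rewrite VtV (negPf ne) mul0r.
Qed.


Lemma kdiagE (k : 'I_d -> R) a b : kdiag k a b = (k a)%:C *+ (a == b).
Proof. by rewrite !mxE. Qed.

Lemma kmul_l (k : 'I_d -> R) (A : 'M[C]_d) a b : (kdiag k *m A) a b = (k a)%:C * A a b.
Proof. by rewrite mul_diag_mx !mxE. Qed.
Lemma kmul_r (k : 'I_d -> R) (A : 'M[C]_d) a b : (A *m kdiag k) a b = A a b * (k b)%:C.
Proof. by rewrite mul_mx_diag !mxE. Qed.

Definition kap j t b := cRe (Ym (Wf t) (pdir Vf (ej R j) t) b b) / sg b t.

Lemma spos t : forall b, 0 < sg b t.
Proof. by move=> b; apply: sg_pos. Qed.

Lemma fwd_struct (HC : forall th, H_SLD Ups psi0 lam th = C_Ups Ups psi0 th) j t :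
  pdir Vf (ej R j) t = Vf t *m kdiag (kap j t).
Proof.
have WW := WWf t; have VE := VWS t.
set D := pdir Vf (ej R j) t.
have E1 := e1 (ej R j) t; rewrite -pderE in E1.
have E2 := e2 j t.
have hO' := hOff (ej R j) t.
have hE : 4 * cRe (\tr (D *m adjmx D)) =
    cRe (\tr (lam j t *m (Vf t *m adjmx (Vf t)) *m lam j t)).
  by rewrite -Ctr -Htr HC.
rewrite VE in E1 E2 hO' hE.
have hy := fwd WW (spos t) (hL j t).1 E1 E2 hO' hE.
rewrite -[D](WWK' WW) VE -mulmxA; congr (_ *m _).
apply/matrixP => a b; rewrite hy Smul_l kdiagE.
have [_|_] := eqVneq a b; last by rewrite mulr0n mulr0.
rewrite mulr1n -rmorphM /= /kap mulrC divfK //.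
by rewrite gt_eqF // sg_pos.
Qed.

Lemma kdiag_sum (c : 'I_m -> R) (k : 'I_m -> 'I_d -> R) :
  \sum_j (c j)%:C *: kdiag (k j) = kdiag (fun b => \sum_j c j * k j b).
Proof.
apply/matrixP => a b; rewrite summxE kdiagE rmorph_sum -sumrMnl.
by apply: eq_bigr => j _; rewrite mxE kdiagE rmorphM mulrnAr.
Qed.

Lemma fwd_dir (HC : forall th, H_SLD Ups psi0 lam th = C_Ups Ups psi0 th) u t :
  pdir Vf u t = Vf t *m kdiag (fun b => \sum_j u 0 j * kap j t b).
Proof.
rewrite pdir_lin; last exact: mdfV.
under eq_bigr do rewrite fwd_struct // scalemxAr.
by rewrite -mulmx_sumr kdiag_sum.
Qed.

Lemma dpk_gen u t (k : 'I_d -> R) : pdir Vf u t = Vf t *m kdiag k ->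
  forall b, 'D_u (pk Ups psi0 b) t = 2 * k b * pk Ups psi0 b t.
Proof.
move=> hD b; have := eO u t; rewrite hD adjmxM.
rewrite (_ : adjmx (kdiag k) = kdiag k); last exact: (adjS k).
move/matrixP/(_ b b); rewrite mxE (@cD_ext _ _ _ (fun s => (pk Ups psi0 b s)%:C)); last first.
  by move=> s; rewrite VtV eqxx mul1r.
rewrite cD_real mxDE -mulmxA kmul_l mulmxA kmul_r VtV eqxx mul1r.
rewrite -!rmorphM -rmorphD /= => [[->]].
ring.
Qed.

Lemma dsg u t b (k : R) : 'D_u (pk Ups psi0 b) t = 2 * k * pk Ups psi0 b t ->
  'D_u (sg b) t = k * sg b t.
Proof.
move=> h.
have e : (sg b * sg b) = pk Ups psi0 b by apply/funext => s; exact: sg_sq.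
have d1 : derivable (sg b) t u by apply: diff_derivable; apply: sg_diff.
have := deriveM d1 d1; rewrite e h -sg_sq /GRing.scale /= => h2.
have sn : sg b t != 0 by rewrite gt_eqF // sg_pos.
apply: (mulfI sn); nra.
Qed.

Lemma dq u t b (k : R) : 'D_u (sg b) t = k * sg b t ->
  'D_u (fun s => (sg b s)^-1) t = - k * (sg b t)^-1.
Proof.
move=> h; have sn : sg b t != 0 by rewrite gt_eqF // sg_pos.
rewrite deriveV //; last by apply: diff_derivable; apply: sg_diff.
rewrite h /GRing.scale /=; field; exact: sn.
Qed.


Lemma wfun_cdf b a : cdf (fun s => ((sg b s)^-1)%:C * Vf s a b).
Proof. by apply: cdfM; [apply: cdf_real; apply: sgV_diff | apply: mdfV]. Qed.

Lemma fwd_final (HC : forall th, H_SLD Ups psi0 lam th = C_Ups Ups psi0 th) :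
  quasi_classical Ups psi0.
Proof.
move=> b t t'; apply/matrixP => a c; rewrite (ord1 c) !w_entry.
pose g := fun s => ((sg b s)^-1)%:C * Vf s a b.
have cd := wfun_cdf b a.
have D0 u x : cD g u x = 0.
  pose k := fun b => \sum_j u 0 j * kap j x b.
  have hD := fwd_dir HC u x.
  have hq := dq (dsg (dpk_gen hD b)).
  rewrite /g cDM; [|apply: cdf_real; apply: sgV_diff | exact: mdfV].
  rewrite cD_real hq.
  have -> : cD (fun s => Vf s a b) u x = Vf x a b * (k b)%:C.
    have -> : cD (fun s => Vf s a b) u x = pdir Vf u x a b by rewrite [RHS]mxE.
    by rewrite hD kmul_r.
  rewrite rmorphM rmorphN /=; ring.
have eR : cRe (g t) = cRe (g t').
  apply: (@const_D0 R m (fun s => cRe (g s))) => [x|u x]; first exact: (cd x).1.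
  by move/eqP: (D0 u x); rewrite eq_complex /= => /andP[/eqP -> _].
have eI : cIm (g t) = cIm (g t').
  apply: (@const_D0 R m (fun s => cIm (g s))) => [x|u x]; first exact: (cd x).2.
  by move/eqP: (D0 u x); rewrite eq_complex /= => /andP[_ /eqP ->].
rewrite -/(g t) -/(g t'); move: eR eI; case: (g t) => ? ?; case: (g t') => ? ? /= -> -> //.
Qed.


Lemma conv_struct (QC : quasi_classical Ups psi0) j t :
  pdir Vf (ej R j) t = Vf t *m kdiag (fun b => 'D_(ej R j) (sg b) t / sg b t).
Proof.
apply/matrixP => a b; rewrite kmul_r [LHS]mxE.
have sn : sg b t != 0 by rewrite gt_eqF // sg_pos.
rewrite (@cD_ext _ _ _ (fun s => (sg b s)%:C * wk Ups psi0 b t a 0)); last first.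
  move=> s; rewrite -(QC b s t) w_entry mulrA -rmorphM mulfV ?mul1r //.
  by rewrite gt_eqF // sg_pos.
rewrite cDM; [|apply: cdf_real; apply: sg_diff | exact: cdf_cst].
rewrite cD_real cD_cst mulr0 addr0 w_entry !rmorphM /=; ring.
Qed.

Lemma main_iff : (forall th, H_SLD Ups psi0 lam th = C_Ups Ups psi0 th)
   <-> quasi_classical Ups psi0.
Proof.
split; first exact: fwd_final.
move=> QC t; apply/matrixP => j k; rewrite Htr Ctr.
have WW := WWf t; have VE := VWS t.
have E1 := e1 (ej R j) t; rewrite -pderE in E1.
have E2 := e2 j t.
have F1 := e1 (ej R k) t; rewrite -pderE in F1.
have F2 := e2 k t.
have S1 := conv_struct QC j t; have S2 := conv_struct QC k t.
rewrite VE in E1 E2 F1 F2 S1 S2 *.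
symmetry; exact: (conv WW (spos t) E1 E2 F1 F2 S1 S2).
Qed.

End Main.

Unset Implicit Arguments.

Theorem lemma9 (R : realType) (m d : nat)
  (n : nat) (E : 'I_n -> 'rV[R]_m -> 'M[R[i]]_d)
  (psi0 : 'cV[R[i]]_d)
  (Ups : 'I_d -> 'rV[R]_m -> 'M[R[i]]_d)
  (lam : 'I_m -> 'rV[R]_m -> 'M[R[i]]_d) :
  (forall k, mx_differentiable (E k)) ->
  (forall theta, \sum_(k < n) adjmx (E k theta) *m E k theta = 1%:M) ->
  adjmx psi0 *m psi0 = 1%:M ->
  (forall k, mx_differentiable (Ups k)) ->
  (forall theta (rho : 'M[R[i]]_d),
      \sum_(k < n) E k theta *m rho *m adjmx (E k theta)
      = \sum_(k < d) Ups k theta *m rho *m adjmx (Ups k theta)) ->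
  (forall theta (j k : 'I_d),
      \tr (Ups k theta *m pure_state psi0 *m adjmx (Ups j theta))
      = (j == k)%:R * (pk Ups psi0 k theta)%:C) ->
  (forall (j : 'I_d) theta, 0 < pk Ups psi0 j theta) ->
  is_SLD Ups psi0 lam ->
  ((forall theta, H_SLD Ups psi0 lam theta = C_Ups Ups psi0 theta)
   <-> quasi_classical Ups psi0).
Proof.
move=> _ _ _ hU _ hO hp hL.
exact: (main_iff hU hO hp hL).
Qed.
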